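(* Let $n\ge k\ge 2$ and $r\ge 0$ be integers. Then for every real $\alpha>1$, \[ \mathsf{opt}_{\operatorname{bandit}}^{\operatorname{det}}(n,k,r)\le \frac{\alpha}{\alpha-1}\,k\ln\!\left(\frac{n\alpha^r}{k}\right)+k-1. \]
   Context: Prediction with expert advice: $\mathcal{Y}=\{1,\dots,k\}$, $\mathcal{X}=[k]^n$, experts $h_i(x)=x_i$, $i=1,\dots,n$. $\mathcal{P}_r$ is the set of finite sequences of examples in $\mathcal{X}\times\mathcal{Y}$ on which some $h_i$ errs on at most $r$ examples. Bandit feedback: each round the adversary presents $x_t$, a deterministic learner predicts $\hat y_t$ as a function of past observations and $x_t$, and learns only whether $\hat y_t$ equals the true label $y_t$. $\mathsf{opt}_{\operatorname{bandit}}^{\operatorname{det}}(n,k,r)$ is the infimum over deterministic learners of the supremum over $S\in\mathcal{P}_r$ of the number of mistakes ($\hat y_t\ne y_t$). *)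

(* Defs.v *)
From HB Require Import structures.
From mathcomp Require Import all_boot all_order all_algebra.
From mathcomp Require Import all_classical all_reals.
From mathcomp Require Import ereal exp.

Set Implicit Arguments.
Unset Strict Implicit.
Unset Printing Implicit Defensive.

(* Labels Y = {1,...,k} are represented by 'I_k = {0,...,k-1};
   instances X = [k]^n are represented by {ffun 'I_n -> 'I_k};
   expert i : 'I_n predicts h_i(x) = x i. *)

Definition inst (n k : nat) := {ffun 'I_n -> 'I_k}.
Definition example (n k : nat) := (inst n k * 'I_k)%type.

(* A past observation of the learner: the instance, its own prediction, and
   the bandit feedback bit (whether the prediction was correct). *)
Definition observation (n k : nat) := (inst n k * 'I_k * bool)%type.

(* A deterministic bandit learner: prediction as a function of the past
   observations (in chronological order) and the current instance. *)
Definition learner (n k : nat) := seq (observation n k) -> inst n k -> 'I_k.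

Definition expert_errors (n k : nat) (i : 'I_n) (S : seq (example n k)) : nat :=
  count (fun e : example n k => e.1 i != e.2) S.

Definition realizable (n k r : nat) (S : seq (example n k)) : Prop :=
  exists i : 'I_n, expert_errors i S <= r.

Fixpoint mistakes_from (n k : nat) (L : learner n k) (h : seq (observation n k))
    (S : seq (example n k)) : nat :=
  match S with
  | [::] => 0
  | (x, y) :: S' =>
      let yh := L h x in
      (yh != y) + mistakes_from L (rcons h (x, yh, yh == y)) S'
  end.

Definition mistakes (n k : nat) (L : learner n k) (S : seq (example n k)) : nat :=
  mistakes_from L [::] S.

Local Open Scope classical_set_scope.
Local Open Scope ereal_scope.

Definition opt_bandit_det (R : realType) (n k r : nat) : \bar R :=
  ereal_inf [set ereal_sup [set ((mistakes L S)%:R)%:E | S in (@realizable n k r)]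
            | L in [set: learner n k]].

(* Main.v *)
Require Import Defs.
From HB Require Import structures.
From mathcomp Require Import all_boot all_order all_algebra.
From mathcomp Require Import all_classical all_reals.
From mathcomp Require Import ereal exp.
From mathcomp Require Import ring lra zify.
Import Order.TTheory GRing.Theory Num.Theory.
Local Open Scope ring_scope.

Definition hpot (R : realType) (alpha : R) (c : nat) (W : R) : R :=
  alpha / (alpha - 1) * c%:R * ln (W / c%:R) + c%:R - 1.
Arguments hpot {R}.

Lemma ln_le_sub1 (R : realType) (t : R) : 0 < t -> ln t <= t - 1.
Proof.
move=> t0; have h := @le_ln1Dx R (t - 1).
have e : 1 + (t - 1) = t by lra.
rewrite e in h; apply: h; lra.
Qed.

Lemma lnB_le (R : realType) (a b : R) : 0 < a -> 0 < b -> ln a - ln b <= a / b - 1.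
Proof.
move=> a0 b0; rewrite -ln_div ?posrE //; apply: ln_le_sub1; exact: divr_gt0.
Qed.

Lemma hpot_mono (R : realType) (alpha : R) (c : nat) (W W' : R) : 1 < alpha -> (0 < c)%N ->
  0 < W' -> W' <= W -> hpot alpha c W' <= hpot alpha c W.
Proof.
move=> a1 c0 W'0 le; rewrite /hpot lerD2r lerD2r.
have c0' : 0 < c%:R :> R by rewrite ltr0n.
apply: ler_wpM2l.
  apply: mulr_ge0 => //; apply: divr_ge0; lra.
rewrite ler_ln ?posrE; last 2 first.
  exact: divr_gt0. apply: divr_gt0 => //; lra.
by rewrite ler_pM2r ?invr_gt0.
Qed.

Lemma hpot_step (R : realType) (alpha : R) (c : nat) (W W' : R) : 1 < alpha ->
  (0 < c)%N -> 0 < W' -> 0 < W ->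
  W' <= W * (1 - (alpha - 1) / alpha / c%:R) -> hpot alpha c W' + 1 <= hpot alpha c W.
Proof.
move=> a1 c0 W'0 W0 le.
have c0' : 0 < c%:R :> R by rewrite ltr0n.
have a0 : 0 < alpha by lra.
have key : ln (W' / c%:R) - ln (W / c%:R) <= - ((alpha - 1) / alpha / c%:R).
  apply: le_trans (@lnB_le R (W' / c%:R) (W / c%:R) _ _) _; [exact: divr_gt0|exact: divr_gt0|].
  have -> : W' / c%:R / (W / c%:R) = W' / W by field; lra.
  rewrite lerBlDr ler_pdivrMr //; lra.
rewrite /hpot.
set g := alpha / (alpha - 1) * c%:R.
have g0 : 0 <= g by apply: mulr_ge0 => //; apply: divr_ge0; lra.
have := ler_wpM2l g0 key.
have -> : g * - ((alpha - 1) / alpha / c%:R) = -1.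
  rewrite /g; field; apply/andP; split; lra.
rewrite mulrBr; lra.
Qed.

Lemma hpot_kill (R : realType) (alpha : R) (j : nat) (X : R) : 1 < alpha ->
  (0 < j)%N -> (j.+1)%:R <= X -> hpot alpha j (X - 1) + 1 <= hpot alpha j.+1 X.
Proof.
move=> a1 j0 le.
have j0' : 0 < j%:R :> R by rewrite ltr0n.
have j1' : 0 < j.+1%:R :> R by rewrite ltr0n.
have X1 : 0 < X - 1 by rewrite -natr1 in le; lra.
set p := (X - 1) / j%:R; set q := X / j.+1%:R.
have p0 : 0 < p by exact: divr_gt0.
have q0 : 0 < q by apply: divr_gt0 => //; lra.
have h1 := @lnB_le R p q p0 q0.
have h2 := @lnB_le R 1 q ltr01 q0; rewrite ln1 sub0r in h2.
have h3 : j%:R * (ln p - ln q) <= j%:R * (p / q - 1) by rewrite ler_pM2l.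
have e : j%:R * (p / q - 1) + (1 / q - 1) = 0.
  rewrite /p /q -natr1; field; apply/andP; split; lra.
have ineq : j%:R * ln p - j.+1%:R * ln q <= 0.
  rewrite -natr1 mulrDl mul1r; rewrite mulrBr in h3; lra.
rewrite /hpot -/p -/q.
set g := alpha / (alpha - 1).
have g0 : 0 <= g by apply: divr_ge0; lra.
have := ler_wpM2l g0 ineq; rewrite mulr0 mulrBr !mulrA -natr1; lra.
Qed.

Lemma hpot_kill1 (R : realType) (alpha : R) (k M : nat) (X : R) : 1 < alpha ->
  (0 < k)%N -> (2 <= M)%N -> M%:R <= X ->
  hpot alpha (minn k M.-1) (X - 1) + (minn k M - minn k M.-1)%:R
    <= hpot alpha (minn k M) X.
Proof.
move=> a1 k0 M2 le.
have X2 : 2 <= X by apply: le_trans le; rewrite ler_nat.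
have [Mk|Mk] := boolP (M <= k)%N.
  have -> : minn k M = M by lia.
  have -> : minn k M.-1 = M.-1 by lia.
  case: M M2 Mk le => [|[|j]] //= _ _ le.
  rewrite subSnn; apply: hpot_kill => //.
have e1 : minn k M = k by lia.
have e2 : minn k M.-1 = k by lia.
rewrite e1 e2 subnn addr0.
apply: hpot_mono => //; lra.
Qed.

Lemma hpot_kills (R : realType) (alpha : R) (k m d : nat) (W : R) : 1 < alpha ->
  (0 < k)%N -> (d < m)%N -> m%:R <= W ->
  hpot alpha (minn k (m - d)) (W - d%:R) + (minn k m - minn k (m - d))%:R
    <= hpot alpha (minn k m) W.
Proof.
move=> a1 k0; elim: d => [|d IH] dm le.
  by rewrite subn0 subr0 subnn addr0.
have IH' := IH (ltnW dm) le.
have := @hpot_kill1 R alpha k (m - d) (W - d%:R) a1 k0 _ _.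
have -> : ((m - d).-1 = m - d.+1)%N by lia.
have -> : W - d%:R - 1 = W - (d.+1)%:R by rewrite -natr1; lra.
move=> /(_ _ _) H; have {}H := H ltac:(lia).
have Hd : (m - d)%:R <= W - d%:R by rewrite natrB; [lra|lia].
have {}H := H Hd.
have -> : (minn k m - minn k (m - d.+1))%N =
   ((minn k (m - d) - minn k (m - d.+1)) + (minn k m - minn k (m - d)))%N by lia.
rewrite natrD; lra.
Qed.

Definition wgt (R : realType) (alpha : R) (r e : nat) : R :=
  if (e <= r)%N then alpha ^+ (r - e) else 0.
Arguments wgt {R}.

Lemma wgt_ge0 (R : realType) (alpha : R) r e : 1 < alpha -> 0 <= wgt alpha r e.
Proof. move=> a1; rewrite /wgt; case: ifP => // _; apply: exprn_ge0; lra. Qed.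

Lemma wgt_ge1 (R : realType) (alpha : R) r e : 1 < alpha -> (e <= r)%N -> 1 <= wgt alpha r e.
Proof. move=> a1 er; rewrite /wgt er; apply: exprn_ege1; lra. Qed.

Lemma wgt_step1 (R : realType) (alpha : R) r e (b : bool) : 1 < alpha ->
  wgt alpha r (e + b) <= wgt alpha r e - (b && (e == r))%:R.
Proof.
move=> a1; case: b => /=; last by rewrite addn0 subr0.
rewrite /wgt addn1.
have [er|er] := boolP (e == r).
  move/eqP: er => ->; rewrite ltnn leqnn subnn expr0 /=; lra.
rewrite /= subr0.
have [lt|ge] := boolP (e < r)%N.
  rewrite (ltnW lt); have -> : (r - e = (r - e.+1).+1)%N by lia.
  rewrite exprS; have h : 0 <= alpha ^+ (r - e.+1) by apply: exprn_ge0; lra.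
  nra.
case: ifP => _ //; apply: exprn_ge0; lra.
Qed.

Lemma wgt_step2 (R : realType) (alpha : R) r e (b : bool) : 1 < alpha ->
  wgt alpha r (e + b) <= wgt alpha r e - (alpha - 1) / alpha * (if b then wgt alpha r e else 0).
Proof.
move=> a1; case: b => /=; last by rewrite addn0 mulr0 subr0.
have a0 : alpha != 0 by apply/eqP; lra.
have -> : wgt alpha r e - (alpha - 1) / alpha * wgt alpha r e = wgt alpha r e / alpha.
  by field.
rewrite /wgt addn1.
have [lt|ge] := boolP (e < r)%N.
  rewrite (ltnW lt); have -> : (r - e = (r - e.+1).+1)%N by lia.
  by rewrite exprS mulrC mulrA mulVf // mul1r.
case: ifP => _; last by rewrite mul0r.
apply: divr_ge0; [apply: exprn_ge0|]; lra.
Qed.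

Lemma alive_step r e (b : bool) :
  (((e + b <= r) + (b && (e == r))) = (e <= r) :> nat)%N.
Proof.
case: b => /=; rewrite ?addn0 ?addn1 ?addn0 //.
by case: (ssrnat.ltngtP e r).
Qed.

Definition Wt (R : realType) (alpha : R) (r n : nat) (e : 'I_n -> nat) : R :=
  \sum_(i < n) wgt alpha r (e i).
Arguments Wt {R}.
Definition al (r n : nat) (e : 'I_n -> nat) : nat := (\sum_(i < n) (e i <= r))%N.
Arguments al r {n}.
Definition Gp (R : realType) (alpha : R) (k r n : nat) (e : 'I_n -> nat) : R :=
  hpot alpha (minn k (al r e)) (Wt alpha r n e).
Arguments Gp {R}.

Lemma Wt_ge_al (R : realType) (alpha : R) r n (e : 'I_n -> nat) : 1 < alpha ->
  (al r e)%:R <= Wt alpha r n e.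
Proof.
move=> a1; rewrite /al /Wt natr_sum; apply: ler_sum => i _.
case: (boolP (e i <= r)%N) => h /=; first exact: wgt_ge1.
exact: wgt_ge0.
Qed.

Lemma al_step r n (e : 'I_n -> nat) (b : 'I_n -> bool) :
  al r e = (al r (fun i => e i + b i) + \sum_(i < n) (b i && (e i == r)))%N.
Proof. by rewrite /al -big_split /=; apply: eq_bigr => i _; rewrite alive_step. Qed.

Lemma Wt_step1 (R : realType) (alpha : R) r n (e : 'I_n -> nat) (b : 'I_n -> bool) :
  1 < alpha ->
  Wt alpha r n (fun i => e i + b i) <=
  Wt alpha r n e - (\sum_(i < n) (b i && (e i == r)) : nat)%:R.
Proof.
move=> a1; rewrite /Wt natr_sum -sumrB; apply: ler_sum => i _; exact: wgt_step1.
Qed.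

Lemma Wt_step2 (R : realType) (alpha : R) r n (e : 'I_n -> nat) (b : 'I_n -> bool) :
  1 < alpha ->
  Wt alpha r n (fun i => e i + b i) <=
  Wt alpha r n e - (alpha - 1) / alpha *
     \sum_(i < n) (if b i then wgt alpha r (e i) else 0).
Proof.
move=> a1; rewrite /Wt mulr_sumr -sumrB; apply: ler_sum => i _; exact: wgt_step2.
Qed.

Lemma Gp_step (R : realType) (alpha : R) k r n (e : 'I_n -> nat) (b : 'I_n -> bool) :
  1 < alpha -> (0 < k)%N -> (0 < al r (fun i => e i + b i))%N ->
  Gp alpha k r n (fun i => e i + b i) <= Gp alpha k r n e.
Proof.
move=> a1 k0 al0.
set e' := fun i => e i + b i.
set d := (\sum_(i < n) (b i && (e i == r)) : nat)%N.
have ale : al r e = (al r e' + d)%N by exact: al_step.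
have al0' : (0 < al r e')%N := al0.
have W1 : Wt alpha r n e' <= Wt alpha r n e - d%:R by exact: Wt_step1.
have Wal := @Wt_ge_al R alpha r n e a1.
have Wal' := @Wt_ge_al R alpha r n e' a1.
have := @hpot_kills R alpha k (al r e) d (Wt alpha r n e) a1 k0 ltac:(lia) Wal.
have -> : (al r e - d = al r e')%N by lia.
move=> H.
rewrite /Gp; apply: le_trans H.
have h0 : 0 <= (minn k (al r e) - minn k (al r e'))%:R :> R by [].
apply: le_trans (_ : hpot alpha (minn k (al r e')) (Wt alpha r n e - d%:R) <= _).
  apply: hpot_mono => //; first lia.
  apply: lt_le_trans Wal'; rewrite ltr0n //.
lra.
Qed.

Lemma Gp_step_mistake (R : realType) (alpha : R) k r n (e : 'I_n -> nat) (b : 'I_n -> bool) :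
  1 < alpha -> (0 < k)%N -> (0 < al r (fun i => e i + b i))%N ->
  Wt alpha r n e <= (minn k (al r e))%:R *
     \sum_(i < n) (if b i then wgt alpha r (e i) else 0) ->
  Gp alpha k r n (fun i => e i + b i) + 1 <= Gp alpha k r n e.
Proof.
move=> a1 k0 al0 hA.
set e' := fun i => e i + b i.
set A := \sum_(i < n) (if b i then wgt alpha r (e i) else 0).
set d := (\sum_(i < n) (b i && (e i == r)) : nat)%N.
have ale : al r e = (al r e' + d)%N by exact: al_step.
have al0' : (0 < al r e')%N := al0.
have W1 : Wt alpha r n e' <= Wt alpha r n e - d%:R by exact: Wt_step1.
have W2 : Wt alpha r n e' <= Wt alpha r n e - (alpha - 1) / alpha * A by exact: Wt_step2.
have Wal := @Wt_ge_al R alpha r n e a1.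
have Wal' := @Wt_ge_al R alpha r n e' a1.
have W'0 : 0 < Wt alpha r n e' by apply: lt_le_trans Wal'; rewrite ltr0n.
rewrite /Gp.
have [ceq|cne] := boolP (minn k (al r e') == minn k (al r e)).
  rewrite (eqP ceq); apply: hpot_step => //; first lia.
    apply: lt_le_trans Wal; rewrite ltr0n; lia.
  set c := minn k (al r e) in hA *.
  have c0 : 0 < c%:R :> R by rewrite ltr0n /c; lia.
  have hWA : Wt alpha r n e / c%:R <= A by rewrite ler_pdivrMr // mulrC.
  have b0 : 0 <= (alpha - 1) / alpha by apply: divr_ge0; lra.
  have := ler_wpM2l b0 hWA.
  have -> : Wt alpha r n e * (1 - (alpha - 1) / alpha / c%:R) =
     Wt alpha r n e - (alpha - 1) / alpha * (Wt alpha r n e / c%:R) by ring.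
  lra.
have := @hpot_kills R alpha k (al r e) d (Wt alpha r n e) a1 k0 ltac:(lia) Wal.
have -> : (al r e - d = al r e')%N by lia.
move=> H; apply: le_trans H.
have h1 : 1 <= (minn k (al r e) - minn k (al r e'))%:R :> R.
  rewrite ler1n; move: cne; lia.
apply: le_trans (_ : hpot alpha (minn k (al r e')) (Wt alpha r n e - d%:R) + 1 <= _).
  rewrite lerD2r; apply: hpot_mono => //; lia.
lra.
Qed.

Definition err (n k : nat) (h : seq (observation n k)) (i : 'I_n) : nat :=
  count (fun o : observation n k => (o.1.1 i == o.1.2) != o.2) h.
Arguments err {n k}.

Definition labw (R : realType) (alpha : R) (r n k : nat) (h : seq (observation n k))
  (x : inst n k) (y : 'I_k) : R :=
  \sum_(i < n | x i == y) wgt alpha r (err h i).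
Arguments labw {R}.

Definition wm (R : realType) (alpha : R) (r n k : nat) (i0 : 'I_k) : learner n k :=
  fun h x => Order.arg_max i0 xpredT (labw alpha r n k h x).
Arguments wm {R}.

Lemma wm_max (R : realType) (alpha : R) r n k i0 h x y :
  labw alpha r n k h x y <= labw alpha r n k h x (wm alpha r n k i0 h x).
Proof. rewrite /wm; case: arg_maxP => //= j _ H; exact: H. Qed.

Lemma Gp_ge0 (R : realType) (alpha : R) k r n (e : 'I_n -> nat) :
  1 < alpha -> (0 < k)%N -> (0 < al r e)%N -> 0 <= Gp alpha k r n e.
Proof.
move=> a1 k0 al0; rewrite /Gp /hpot.
have Wal := @Wt_ge_al R alpha r n e a1.
set c := minn k (al r e).
have c1 : 1 <= c%:R :> R by rewrite ler1n /c; lia.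
have cW : c%:R <= Wt alpha r n e.
  apply: le_trans Wal; rewrite ler_nat /c; lia.
have l0 : 0 <= ln (Wt alpha r n e / c%:R).
  apply: ln_ge0; rewrite ler_pdivlMr ?mul1r //; lra.
have g0 : 0 <= alpha / (alpha - 1) * c%:R by apply: mulr_ge0; [apply: divr_ge0|]; lra.
have := mulr_ge0 g0 l0; lra.
Qed.

Lemma err_rcons n k (h : seq (observation n k)) o :
  err (rcons h o) = (fun i => err h i + ((o.1.1 i == o.1.2) != o.2)).
Proof. by apply: boolp.funext => i; rewrite /err -cats1 count_cat /= addn0. Qed.

Lemma al_pos r n (e : 'I_n -> nat) (i : 'I_n) : (e i <= r)%N -> (0 < al r e)%N.
Proof. by move=> h; rewrite /al (bigD1 i) //= h. Qed.

Lemma Wt_le_k (R : realType) (alpha : R) r n k h x (yh : 'I_k) : 1 < alpha ->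
  (forall y, labw alpha r n k h x y <= labw alpha r n k h x yh) ->
  Wt alpha r n (err h) <= k%:R * labw alpha r n k h x yh.
Proof.
move=> a1 H; rewrite /Wt (partition_big (fun i => x i) xpredT) //=.
apply: le_trans (_ : \sum_(j < k) labw alpha r n k h x yh <= _).
  by apply: ler_sum => j _; exact: H.
by rewrite sumr_const card_ord mulr_natl.
Qed.

Lemma Wt_le_al (R : realType) (alpha : R) r n k h x (yh : 'I_k) : 1 < alpha ->
  (forall y, labw alpha r n k h x y <= labw alpha r n k h x yh) ->
  Wt alpha r n (err h) <= (al r (err h))%:R * labw alpha r n k h x yh.
Proof.
move=> a1 H; rewrite /Wt /al natr_sum mulr_suml; apply: ler_sum => i _.
case: (boolP (err h i <= r)%N) => hi /=.
  rewrite mul1r; apply: le_trans (H (x i)).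
  rewrite /labw (bigD1 i) //= lerDl; apply: sumr_ge0 => j _; exact: wgt_ge0.
by rewrite mul0r /wgt (negbTE hi).
Qed.

Lemma main_bound (R : realType) (alpha : R) k r n (i0 : 'I_k) (istar : 'I_n) :
  1 < alpha -> (0 < k)%N ->
  forall S h, (err h istar + expert_errors istar S <= r)%N ->
  (mistakes_from (wm alpha r n k i0) h S)%:R <= Gp alpha k r n (err h).
Proof.
move=> a1 k0; elim=> [|[x y] S IH] h H /=.
  rewrite /expert_errors /= addn0 in H.
  by apply: Gp_ge0 => //; apply: (@al_pos r n _ istar).
set yh := wm alpha r n k i0 h x.
have He : expert_errors istar ((x, y) :: S) = ((x istar != y) + expert_errors istar S)%N by [].
rewrite He in H.
set b := fun i => (x i == yh) != (yh == y).
have Herr : err (rcons h (x, yh, yh == y)) = fun i => err h i + b i by rewrite err_rcons.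
have Hb : (b istar <= (x istar != y))%N.
  rewrite /b; case E: (yh == y) => /=.
    by move/eqP: E => ->; case: (x istar == y).
  case E2: (x istar == yh) => //=.
  by move/eqP: E2 => ->; rewrite E.
have IH' := IH (rcons h (x, yh, yh == y)).
rewrite Herr in IH'.
have {}IH' := IH' ltac:(lia).
have alpos : (0 < al r (fun i => err h i + b i))%N.
  by apply: (@al_pos r n _ istar); lia.
rewrite natrD.
case E: (yh == y); rewrite E in IH'.
  rewrite /= add0r; apply: le_trans IH' _; exact: Gp_step.
have -> : (((~~ false) : nat)%:R : R) = 1 by [].
rewrite addrC.
have Hmax : forall y', labw alpha r n k h x y' <= labw alpha r n k h x yh by move=> y'; exact: wm_max.
apply: le_trans (_ : Gp alpha k r n (fun i => err h i + b i) + 1 <= _); first by rewrite lerD2r.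
apply: Gp_step_mistake => //.
have -> : \sum_(i < n) (if b i then wgt alpha r (err h i) else 0) = labw alpha r n k h x yh.
  rewrite /labw [RHS]big_mkcond; apply: eq_bigr => i _; rewrite /b E.
  by case: (x i == yh).
rewrite /minn; case: ifP => _.
  exact: Wt_le_k.
exact: Wt_le_al.
Qed.

Theorem lemma4p2 (R : realType) (n k r : nat) (alpha : R) :
  (2 <= k)%N -> (k <= n)%N -> 1 < alpha ->
  (opt_bandit_det R n k r <=
   (alpha / (alpha - 1) * k%:R * ln (n%:R * alpha ^+ r / k%:R) + k%:R - 1)%:E)%E.
Proof.
move=> k2 kn a1.
have k0 : (0 < k)%N by lia.
pose i0 : 'I_k := Ordinal k0.
pose L := wm alpha r n k i0.
apply: (@le_trans _ _ (ereal_sup [set ((mistakes L S)%:R)%:E | S in (@realizable n k r)])).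
  by apply: ereal_inf_lbound; exists L.
apply: ge_ereal_sup => z [S [istar HS] <-].
rewrite lee_fin.
apply: le_trans (@main_bound R alpha k r n i0 istar a1 k0 S [::] _) _.
  by rewrite add0n.
have -> : err (n:=n) (k:=k) [::] = fun _ => 0%N by [].
rewrite /Gp /hpot.
have -> : al r (fun _ : 'I_n => 0%N) = n.
  by rewrite /al /= sum_nat_const card_ord muln1.
have -> : minn k n = k by lia.
have -> : Wt alpha r n (fun _ => 0%N) = n%:R * alpha ^+ r.
  by rewrite /Wt /wgt /= sumr_const card_ord subn0 mulr_natl.
by [].
Qed.
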